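(* Let $\mathcal{R}=\{z\in\mathbb{C}:\Re(z)>0\}$ and let $\Phi:\mathcal{R}\to\mathbb{C}$ be analytic and satisfy: (a) for all $0<a<b<\infty$, $\lim_{y\to\pm\infty} e^{-\pi|y|}\int_a^b\left|\frac{\Phi(x+iy)}{x+iy}\right|\mathrm{d}x=0$; (b) for every $\eta>0$, $\sup_{x\ge\eta}\int_{-\infty}^\infty\left|\frac{\Phi(x+iy)}{x+iy}\right|e^{-\pi|y|}\,\mathrm{d}y<\infty$; (c) $\lim_{x\to\infty}\int_{-\infty}^\infty\left|\frac{\Phi(x+iy)}{x+iy}\right|e^{-\pi|y|}\,\mathrm{d}y=0$. Let $\beta>0$ with $\beta-\frac12\notin\mathbb{Z}$, and for $z$ with $|\Re(z)|\ne\beta$ define $$I(\beta,\Phi;z)=\frac{1}{2\pi i}\int_{\beta-i\infty}^{\beta+i\infty}\left(\frac{\cos\pi z}{\cos\pi w}\right)\left(\frac{2w}{z^2-w^2}\right)\Phi(w)\,\mathrm{d}w,$$ and $B(\beta,\Phi)=\frac{2}{\pi}\int_{-\infty}^{\infty}\left|\frac{\Phi(\beta+iv)}{\beta+iv}\right|e^{-\pi|v|}\,\mathrm{d}v$. Then for every $z=x+iy$ with $|x|\ne\beta$, $$|I(\beta,\Phi;z)|\le B(\beta,\Phi)\,|\sec\pi\beta|\left(1+\frac{|z|}{\bigl||x|-\beta\bigr|}\right)e^{\pi|y|}.$$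
   Context: Under the hypotheses the integrand defining $I(\beta,\Phi;z)$ is integrable along the line $\Re(w)=\beta$. *)

(* Defs.v *)
From HB Require Import structures.
From mathcomp Require Import all_boot all_order all_algebra.
From mathcomp Require Import all_classical all_reals all_analysis.
From mathcomp Require Import complex.
Set Implicit Arguments. Unset Strict Implicit. Unset Printing Implicit Defensive.
Import Order.TTheory GRing.Theory Num.Theory.
Import numFieldNormedType.Exports.
Local Open Scope ring_scope.
Local Open Scope complex_scope.

Section Defs.
Variable R : realType.
Local Notation C := R[i].

Definition cRe (z : C) : R := complex.Re z.
Definition cIm (z : C) : R := complex.Im z.
Definition cabs (z : C) : R := Num.sqrt (cRe z ^+ 2 + cIm z ^+ 2).

Definition mkC (x y : R) : C := Complex x y.

Definition coshR (t : R) : R := (expR t + expR (- t)) / 2.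
Definition sinhR (t : R) : R := (expR t - expR (- t)) / 2.

(* complex cosine: cos(a + i b) = cos a cosh b - i sin a sinh b *)
Definition ccos (z : C) : C :=
  Complex (cos (cRe z) * coshR (cIm z)) (- (sin (cRe z) * sinhR (cIm z))).

Definition right_half_plane : set C := [set z | 0 < cRe z].

Definition holomorphic_on (D : set C) (f : C -> C) : Prop :=
  forall w, D w -> exists l : C, forall eps : R, 0 < eps ->
    exists2 delta : R, 0 < delta & forall h : C, h != 0 -> cabs h < delta ->
      w + h \in D -> cabs ((f (w + h) - f w) / h - l) < eps.

Definition cintegral (f : R -> C) : C :=
  Complex (Rintegral lebesgue_measure setT (fun v => cRe (f v)))
          (Rintegral lebesgue_measure setT (fun v => cIm (f v))).

(* I(beta, Phi; z) = 1/(2 pi i) int_{beta - i oo}^{beta + i oo}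
     (cos pi z / cos pi w) (2 w / (z^2 - w^2)) Phi(w) dw,
   with the contour parametrised by w = beta + i v, dw = i dv. *)
Definition piC : C := (pi : R)%:C.
Definition Iint (beta : R) (Phi : C -> C) (z : C) : C :=
  (2 * piC * 'i)^-1 *
  cintegral (fun v => let w := mkC beta v in
     (ccos (piC * z) / ccos (piC * w)) * (2 * w / (z ^+ 2 - w ^+ 2)) * Phi w * 'i).

Definition Bconst (beta : R) (Phi : C -> C) : R :=
  2 / pi * Rintegral lebesgue_measure setT
    (fun v => cabs (Phi (mkC beta v) / mkC beta v) * expR (- pi * `|v|)).

End Defs.
Arguments right_half_plane {R}.

(* Main.v *)
Require Import Defs.
From HB Require Import structures.
From mathcomp Require Import all_boot all_order all_algebra.
From mathcomp Require Import all_classical all_reals all_analysis.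
From mathcomp Require Import complex.
From mathcomp Require Import ring lra.
From mathcomp Require Import measurable_realfun.
Import Order.TTheory GRing.Theory Num.Theory.
Import numFieldNormedType.Exports.
Local Open Scope ring_scope.
Local Open Scope classical_set_scope.

Set Implicit Arguments.
Section S.
Variable R : realType.
Local Notation C := R[i].
Local Notation mu := (@lebesgue_measure R).

Lemma abs_le_sqrt (a b : R) : `|a| <= Num.sqrt (a ^+ 2 + b ^+ 2).
Proof.
rewrite -sqrtr_sqr ler_sqrt ?addr_ge0 ?sqr_ge0 //.
by rewrite lerDl sqr_ge0.
Qed.

Lemma cs_le (A B a b : R) :
  A * a + B * b <= Num.sqrt (A ^+ 2 + B ^+ 2) * Num.sqrt (a ^+ 2 + b ^+ 2).
Proof.
rewrite -sqrtrM ?addr_ge0 ?sqr_ge0 //.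
apply: (le_trans (ler_norm _)).
rewrite -sqrtr_sqr ler_sqrt ?mulr_ge0 ?addr_ge0 ?sqr_ge0 //.
have: 0 <= (A * b - B * a) ^+ 2 by apply: sqr_ge0.
move=> H; nra.
Qed.
Lemma cRe_le (z : C) : `|cRe z| <= cabs z.
Proof. exact: abs_le_sqrt. Qed.
Lemma cIm_le (z : C) : `|cIm z| <= cabs z.
Proof. by rewrite /cabs addrC; exact: abs_le_sqrt. Qed.

Lemma key (g : R -> C) (h : R -> R) (K : R) :
  continuous (fun v => cRe (g v)) -> continuous (fun v => cIm (g v)) ->
  measurable_fun setT h ->
  (\int[mu]_(v in setT) (h v)%:E < +oo)%E -> (forall v, 0 <= h v) ->
  (forall v, cabs (g v) <= K * h v) ->
  cabs (cintegral g) <= K * Rintegral mu setT h.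
Proof.
move=> cre cim mh hfin h0 gh.
have ih : mu.-integrable setT (EFin \o h).
  apply/integrableP; split; first exact/measurable_EFinP.
  under eq_integral do rewrite /= ger0_norm ?h0//.
  exact: hfin.
have iKh := integrableZl measurableT K ih.
have ire : mu.-integrable setT (EFin \o (fun v => cRe (g v))).
  apply: (le_integrable measurableT _ _ iKh).
    by apply/measurable_EFinP; exact: continuous_measurable_fun.
  move=> v _ /=; rewrite lee_fin.
  apply: (le_trans (cRe_le _)); apply: (le_trans (gh v)); exact: ler_norm.
have iim : mu.-integrable setT (EFin \o (fun v => cIm (g v))).
  apply: (le_integrable measurableT _ _ iKh).
    by apply/measurable_EFinP; exact: continuous_measurable_fun.
  move=> v _ /=; rewrite lee_fin.
  apply: (le_trans (cIm_le _)); apply: (le_trans (gh v)); exact: ler_norm.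
set A := Rintegral mu setT (fun v => cRe (g v)).
set B := Rintegral mu setT (fun v => cIm (g v)).
have -> : cabs (cintegral g) = Num.sqrt (A ^+ 2 + B ^+ 2) by [].
set S := Num.sqrt _.
have Kh0 : 0 <= K * Rintegral mu setT h.
  rewrite -RintegralZl//; apply: Rintegral_ge0 => v _.
  apply: le_trans (gh v); exact: sqrtr_ge0.
have ihS : mu.-integrable setT (EFin \o (fun v => S * K * h v)).
  apply: (eq_integrable measurableT _ _ _ (integrableZl measurableT (S * K) ih)).
  by move=> v _ /=.
have ire' : mu.-integrable setT (EFin \o (fun v => A * cRe (g v))).
  apply: (eq_integrable measurableT _ _ _ (integrableZl measurableT A ire)).
  by move=> v _ /=; rewrite -EFinM.
have iim' : mu.-integrable setT (EFin \o (fun v => B * cIm (g v))).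
  apply: (eq_integrable measurableT _ _ _ (integrableZl measurableT B iim)).
  by move=> v _ /=; rewrite -EFinM.
have ilin : mu.-integrable setT
    (EFin \o (fun v => A * cRe (g v) + B * cIm (g v))).
  apply: (eq_integrable measurableT _ _ _ (integrableD measurableT ire' iim')).
  by move=> v _ /=.
have HS : S ^+ 2 <= S * (K * Rintegral mu setT h).
  rewrite sqr_sqrtr ?addr_ge0 ?sqr_ge0//.
  have -> : A ^+ 2 + B ^+ 2 =
      Rintegral mu setT (fun v => A * cRe (g v) + B * cIm (g v)).
    by rewrite RintegralD// !RintegralZl// !expr2.
  rewrite mulrA -RintegralZl//.
  apply: le_Rintegral => // v _.
  apply: (le_trans (cs_le _ _ _ _)).
  by rewrite -mulrA; apply: ler_wpM2l; [exact: sqrtr_ge0|exact: gh].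
have S0 : 0 <= S by exact: sqrtr_ge0.
have [->|Spos] := eqVneq S 0; first by [].
have Sgt : 0 < S by rewrite lt_def Spos S0.
by rewrite expr2 ler_pM2l in HS.
Qed.
Lemma cReM (a b : C) : cRe (a * b) = cRe a * cRe b - cIm a * cIm b.
Proof. by case: a; case: b. Qed.
Lemma cImM (a b : C) : cIm (a * b) = cRe a * cIm b + cIm a * cRe b.
Proof. by case: a; case: b. Qed.
Lemma cReD (a b : C) : cRe (a + b) = cRe a + cRe b.
Proof. by case: a; case: b. Qed.
Lemma cImD (a b : C) : cIm (a + b) = cIm a + cIm b.
Proof. by case: a; case: b. Qed.
Lemma cReN (a : C) : cRe (- a) = - cRe a.
Proof. by case: a. Qed.
Lemma cImN (a : C) : cIm (- a) = - cIm a.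
Proof. by case: a. Qed.
Lemma cReV (a : C) : cRe (a^-1) = cRe a / (cRe a ^+ 2 + cIm a ^+ 2).
Proof. by case: a. Qed.
Lemma cImV (a : C) : cIm (a^-1) = - cIm a / (cRe a ^+ 2 + cIm a ^+ 2).
Proof. by case: a => a b; rewrite /cIm /= mulNr. Qed.
Lemma cnorm2_neq0 (a : C) : a != 0 -> cRe a ^+ 2 + cIm a ^+ 2 != 0.
Proof.
case: a => a b H; apply/negP => /eqP Hs.
move: H; rewrite /cRe /cIm /= in Hs.
have a0 : a = 0 by apply/eqP; rewrite -sqrf_eq0; apply/eqP; nra.
have b0 : b = 0 by apply/eqP; rewrite -sqrf_eq0; apply/eqP; nra.
by rewrite a0 b0 eqxx.
Qed.

Definition ccont (F : R -> C) := forall x,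
  {for x, continuous (fun v => cRe (F v))} /\
  {for x, continuous (fun v => cIm (F v))}.

Lemma ccont_cst (c : C) : ccont (fun _ => c).
Proof. by move=> x; split; apply: cvg_cst. Qed.

Lemma ccont_add F G : ccont F -> ccont G -> ccont (fun v => F v + G v).
Proof.
move=> cF cG x; have [F1 F2] := cF x; have [G1 G2] := cG x; split.
- have -> : (fun v => cRe (F v + G v)) = (fun v => cRe (F v) + cRe (G v)) by apply/funext=> v; rewrite cReD.
  exact: continuousD.
- have -> : (fun v => cIm (F v + G v)) = (fun v => cIm (F v) + cIm (G v)) by apply/funext=> v; rewrite cImD.
  exact: continuousD.
Qed.

Lemma ccont_opp F : ccont F -> ccont (fun v => - F v).
Proof.
move=> cF x; have [F1 F2] := cF x; split.
- have -> : (fun v => cRe (- F v)) = (fun v => - cRe (F v)) by apply/funext=> v; rewrite cReN.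
  exact: continuousN.
- have -> : (fun v => cIm (- F v)) = (fun v => - cIm (F v)) by apply/funext=> v; rewrite cImN.
  exact: continuousN.
Qed.

Lemma ccont_mul F G : ccont F -> ccont G -> ccont (fun v => F v * G v).
Proof.
move=> cF cG x; have [F1 F2] := cF x; have [G1 G2] := cG x; split.
- have -> : (fun v => cRe (F v * G v)) = (fun v => cRe (F v) * cRe (G v) - cIm (F v) * cIm (G v)) by apply/funext=> v; rewrite cReM.
  by apply: continuousB; apply: continuousM.
- have -> : (fun v => cIm (F v * G v)) = (fun v => cRe (F v) * cIm (G v) + cIm (F v) * cRe (G v)) by apply/funext=> v; rewrite cImM.
  by apply: continuousD; apply: continuousM.
Qed.

Lemma ccont_inv F : ccont F -> (forall v, F v != 0) -> ccont (fun v => (F v)^-1).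
Proof.
move=> cF nz x; have [F1 F2] := cF x.
have Hn : {for x, continuous (fun v => (cRe (F v) ^+ 2 + cIm (F v) ^+ 2)^-1)}.
  apply: continuousV; first exact: cnorm2_neq0.
  by apply: continuousD; rewrite /GRing.exp /=; apply: continuousM.
split.
- have -> : (fun v => cRe ((F v)^-1)) = (fun v => cRe (F v) * (cRe (F v) ^+ 2 + cIm (F v) ^+ 2)^-1) by apply/funext=> v; rewrite cReV.
  exact: continuousM.
- have -> : (fun v => cIm ((F v)^-1)) = (fun v => - cIm (F v) * (cRe (F v) ^+ 2 + cIm (F v) ^+ 2)^-1) by apply/funext=> v; rewrite cImV.
  by apply: continuousM => //; exact: continuousN.
Qed.

Lemma ccont_cabs F : ccont F -> continuous (fun v => cabs (F v)).
Proof.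
move=> cF x; have [F1 F2] := cF x.
apply: (continuous_comp (f := fun v => cRe (F v) ^+ 2 + cIm (F v) ^+ 2)).
  by apply: continuousD; rewrite /GRing.exp /=; apply: continuousM.
exact: sqrt_continuous.
Qed.

Lemma continuous_coshR : continuous (@coshR R).
Proof.
move=> x; rewrite /coshR.
apply: (continuousM (s := fun t => expR t + expR (- t)) (t := fun _ => 2^-1)); last exact: cvg_cst.
apply: continuousD; first exact: continuous_expR.
apply: (continuous_comp (f := fun t => - t)); first exact: continuousN.
exact: continuous_expR.
Qed.

Lemma continuous_sinhR : continuous (@sinhR R).
Proof.
move=> x; rewrite /sinhR.
apply: (continuousM (s := fun t => expR t - expR (- t)) (t := fun _ => 2^-1)); last exact: cvg_cst.
apply: continuousB; first exact: continuous_expR.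
apply: (continuous_comp (f := fun t => - t)); first exact: continuousN.
exact: continuous_expR.
Qed.

Lemma ccont_ccos F : ccont F -> ccont (fun v => ccos (F v)).
Proof.
move=> cF x; have [F1 F2] := cF x; split => /=.
- apply: continuousM.
    exact: (continuous_comp F1 (@continuous_cos R _)).
  exact: (continuous_comp F2 (@continuous_coshR _)).
- apply: continuousN; apply: continuousM.
    exact: (continuous_comp F1 (@continuous_sin R _)).
  exact: (continuous_comp F2 (@continuous_sinhR _)).
Qed.
Lemma cabsE (z : C) : cabs z = Normc.normc z.
Proof. by case: z. Qed.
Lemma cabsM (a b : C) : cabs (a * b) = cabs a * cabs b.
Proof. by rewrite !cabsE Normc.normcM. Qed.
Lemma cabsV (a : C) : cabs (a^-1) = (cabs a)^-1.
Proof. by rewrite !cabsE Normc.normcV. Qed.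
Lemma cabsD (a b : C) : cabs (a + b) <= cabs a + cabs b.
Proof. by rewrite !cabsE le_normcD. Qed.
Lemma cabsN (a : C) : cabs (- a) = cabs a.
Proof. by rewrite !cabsE normcN. Qed.
Lemma cabs_ge0 (a : C) : 0 <= cabs a.
Proof. exact: sqrtr_ge0. Qed.

Lemma cabs_imag (a : R) : cabs (mkC 0 a) = `|a|.
Proof. by rewrite /cabs /cRe /cIm /= expr0n /= add0r sqrtr_sqr. Qed.

Lemma ccont_of_eps F :
  (forall x e, 0 < e -> exists2 d, 0 < d &
     forall t, `|x - t| < d -> cabs (F x - F t) < e) -> ccont F.
Proof.
move=> H x; split; apply/cvgrPdist_lt => e e0; apply/nbhs_ballP;
  have [d d0 Hd] := H x e e0; exists d => // t /= ht;
  have := Hd t ht; apply: le_lt_trans.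
- by have := cRe_le (F x - F t); rewrite cReD cReN.
- by have := cIm_le (F x - F t); rewrite cImD cImN.
Qed.

Lemma ccont_Phi (Phi : C -> C) beta :
  holomorphic_on right_half_plane Phi -> 0 < beta ->
  ccont (fun v => Phi (mkC beta v)).
Proof.
move=> hol b0; apply: ccont_of_eps => x e e0.
have [l Hl] := hol (mkC beta x) b0.
have [d1 d10 Hd1] := Hl 1 ltr01.
set L := cabs l.
have L0 : 0 < L + 1 by rewrite ltr_wpDl // cabs_ge0.
exists (Num.min d1 (e / (L + 1))).
  by rewrite lt_min d10 divr_gt0.
move=> t; rewrite lt_min => /andP[htd1 hte].
have [->|tx] := eqVneq t x; first by rewrite subrr /cabs /cRe /cIm /= expr0n /= addr0 sqrtr0.
set hh := mkC 0 (t - x).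
have hh0 : hh != 0.
  apply/negP => /eqP /(congr1 (@cIm R)); rewrite /cIm /= => /eqP.
  by rewrite subr_eq0 (negPf tx).
have chh : cabs hh = `|x - t| by rewrite cabs_imag distrC.
have Ewh : mkC beta x + hh = mkC beta t.
  by rewrite /hh /mkC /=; congr Complex; rewrite ?addr0 // addrC subrK.
have := Hd1 hh hh0; rewrite chh => /(_ htd1).
rewrite Ewh inE /right_half_plane /cRe /= => /(_ b0) HQ.
set Q := (_ - _) / hh in HQ.
have QL : cabs Q <= L + 1.
  have -> : Q = (Q - l) + l by rewrite subrK.
  by apply: (le_trans (cabsD _ _)); rewrite addrC lerD2l ltW.
have -> : Phi (mkC beta x) - Phi (mkC beta t) = - (Q * hh).
  by rewrite /Q divfK // opprB.
rewrite cabsN cabsM chh.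
apply: (le_lt_trans (ler_wpM2r (normr_ge0 _) QL)).
by rewrite mulrC -ltr_pdivlMr.
Qed.

Lemma cos_addnpi (a : R) n : cos (a + pi *+ n) = (-1) ^+ n * cos a.
Proof.
elim: n => [|n IH]; first by rewrite mulr0n addr0 expr0 mul1r.
by rewrite mulrSr addrA cosDpi IH exprS mulN1r mulNr.
Qed.

Lemma cos_pibeta_neq0 (beta : R) : 0 < beta ->
  (forall k : int, beta - 2^-1 != k%:~R) -> cos (pi * beta) != 0.
Proof.
move=> b0 H; set n := Num.truncn beta.
have /andP[nle ltn] := Num.Theory.truncn_itv (ltW b0).
set f := beta - n%:R.
have f0 : 0 <= f by rewrite subr_ge0.
have f1 : f < 1 by rewrite /f ltrBlDr [1 + _]addrC natr1.
have -> : pi * beta = pi * f + pi *+ n.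
  by rewrite /f mulrBr mulr_natr subrK.
rewrite cos_addnpi mulf_eq0 negb_or signr_eq0 /=.
apply/eqP => cf.
have pif : pi * f = pi / 2.
  apply: cos_inj; last by rewrite cf cos_pihalf.
  - rewrite in_itv /= mulr_ge0 ?pi_ge0 //=.
    by rewrite ler_piMr ?pi_ge0 // ltW.
  - rewrite in_itv /= divr_ge0 ?pi_ge0 //= ler_pdivrMr // ler_peMr ?pi_ge0 //.
    by rewrite ler1n.
have fh : f = 2^-1.
  apply: (@mulfI _ pi); first by rewrite gt_eqF // pi_gt0.
  by rewrite pif.
by move: (H n); rewrite -fh /f opprB addrC subrK eqxx.
Qed.

Lemma coshR_ge (b : R) : expR `|b| / 2 <= coshR b.
Proof.
rewrite /coshR ler_pM2r ?invr_gt0 // .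
have := expR_gt0 b; have := expR_gt0 (- b).
case: (ler0P b) => hb; lra.
Qed.

Lemma coshR_le (b : R) : coshR b <= expR `|b|.
Proof.
rewrite /coshR.
have h1 : expR b <= expR `|b| by rewrite ler_expR ler_norm.
have h2 : expR (- b) <= expR `|b| by rewrite ler_expR -normrN ler_norm.
lra.
Qed.

Lemma coshR_ge0 (b : R) : 0 <= coshR b.
Proof. apply: le_trans (coshR_ge b); apply: divr_ge0 => //; exact: ltW (expR_gt0 _). Qed.

Lemma cosh2_sinh2 (b : R) : coshR b ^+ 2 - sinhR b ^+ 2 = 1.
Proof.
rewrite /coshR /sinhR.
have e : expR b * expR (- b) = 1 by rewrite -expRD subrr expR0.
set p := expR b in e *; set q := expR (- b) in e *.
transitivity (p * q); last exact: e.
by rewrite mulr2n; field.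
Qed.

Lemma ccos_le (u : C) : cabs (ccos u) <= expR `|cIm u|.
Proof.
apply: le_trans (coshR_le _).
rewrite -[X in _ <= X]ger0_norm ?coshR_ge0 // -sqrtr_sqr /cabs.
rewrite ler_sqrt ?sqr_ge0 //.
rewrite /ccos /cRe /cIm /=.
set a := complex.Re u; set b := complex.Im u.
have h1 := cos2Dsin2 a. have h2 := cosh2_sinh2 b.
have h3 := sqr_ge0 (cos a); have h4 := sqr_ge0 (sin a).
have h5 := sqr_ge0 (sinhR b).
rewrite sqrrN !exprMn.
have -> : (expR b + expR (- b)) ^+ 2 * 2^-1 ^+ 2 = coshR b ^+ 2 by rewrite /coshR exprMn.
have -> : (expR b - expR (- b)) ^+ 2 * 2^-1 ^+ 2 = sinhR b ^+ 2 by rewrite /sinhR exprMn.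
have E : cos a ^+ 2 * coshR b ^+ 2 + sin a ^+ 2 * sinhR b ^+ 2 = coshR b ^+ 2 - sin a ^+ 2.
  have -> : cos a ^+ 2 = 1 - sin a ^+ 2 by rewrite -h1 addrK.
  have -> : sinhR b ^+ 2 = coshR b ^+ 2 - 1 by rewrite -h2 opprB addrC subrK.
  ring.
by rewrite E lerBlDr lerDl.
Qed.

Lemma ccos_ge (u : C) : `|cos (cRe u)| * coshR (cIm u) <= cabs (ccos u).
Proof.
rewrite -[X in X <= _]ger0_norm ?mulr_ge0 ?coshR_ge0 // -sqrtr_sqr /cabs.
rewrite ler_sqrt ?addr_ge0 ?sqr_ge0 //.
rewrite /ccos /cRe /cIm /= exprMn real_normK ?num_real // -exprMn lerDl; exact: sqr_ge0.
Qed.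
Lemma cabsMn (a : C) n : cabs (a *+ n) = cabs a *+ n.
Proof. by rewrite !cabsE normcMn. Qed.

Lemma frac_bound (z w : C) (d : R) : 0 < d -> d <= cabs (w - z) ->
  d <= cabs (w + z) ->
  cabs w ^+ 2 <= (1 + cabs z / d) * cabs (z ^+ 2 - w ^+ 2).
Proof.
move=> d0 hp hq.
set p := cabs (w - z) in hp *; set q := cabs (w + z) in hq *.
have Epq : cabs (z ^+ 2 - w ^+ 2) = p * q.
  have -> : z ^+ 2 - w ^+ 2 = - ((w - z) * (w + z)) by ring.
  by rewrite cabsN cabsM.
rewrite Epq.
have HW : cabs w ^+ 2 <= p * q + cabs z ^+ 2.
  have e1 : cabs w ^+ 2 = cabs (w ^+ 2) by rewrite !expr2 cabsM.
  have e2 : cabs z ^+ 2 = cabs (z ^+ 2) by rewrite !expr2 cabsM.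
  rewrite e1 e2 -Epq.
  have E : w ^+ 2 = - (z ^+ 2 - w ^+ 2) + z ^+ 2 by ring.
  rewrite [X in cabs X <= _]E.
  by apply: le_trans (cabsD _ _) _; rewrite cabsN.
have HZ : cabs z *+ 2 <= p + q.
  rewrite -cabsMn.
  have -> : z *+ 2 = (w + z) - (w - z) by rewrite mulr2n; ring.
  by apply: le_trans (cabsD _ _) _; rewrite cabsN addrC.
set Z := cabs z in HW HZ *.
have Z0 : 0 <= Z by exact: cabs_ge0.
set t := Z / d.
have Zt : Z = t * d by rewrite /t divfK // gt_eqF.
have t0 : 0 <= t by rewrite divr_ge0 // ltW.
have p0 : 0 <= p - d by rewrite subr_ge0.
have q0 : 0 <= q - d by rewrite subr_ge0.
have Hd : Z * d <= p * q.
  rewrite mulr2n in HZ; nra.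
rewrite Zt in Hd HW.
nra.
Qed.
Lemma real_bound (a b c0 e E W P F t : R) : 0 <= a -> a <= E -> 0 < c0 ->
  0 < e -> c0 * e / 2 <= b -> 0 < W -> 0 < P -> W ^+ 2 <= (1 + t) * P ->
  0 <= F -> 0 <= t ->
  a / b * (2 * W / P) * F * 1 <= 4 * E / c0 * (1 + t) * (F / W / e).
Proof.
move=> a0 aE c00 e0 cb W0 P0 WP F0 t0.
have ce0 : 0 < c0 * e / 2 by rewrite divr_gt0 ?mulr_gt0.
have b0 : 0 < b by exact: lt_le_trans cb.
have h1 : a / b <= E * (c0 * e / 2)^-1.
  apply: ler_pM => //; first by rewrite invr_ge0 ltW.
  by rewrite lef_pV2 // posrE.
have h2 : 2 * W / P <= 2 * (1 + t) / W.
  rewrite -!mulrA ler_pM2l // ler_pdivrMr // mulrAC ler_pdivlMr // -expr2.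
have h3 : a / b * (2 * W / P) <= E * (c0 * e / 2)^-1 * (2 * (1 + t) / W).
  apply: ler_pM => //; first by rewrite divr_ge0 // ltW.
  by rewrite !mulr_ge0 // ?invr_ge0 ?ltW.
rewrite mulr1.
apply: le_trans (ler_wpM2r F0 h3) _.
rewrite le_eqVlt; apply/orP; left; apply/eqP.
by field; rewrite !gt_eqF.
Qed.

End S.

Unset Implicit Arguments.

Theorem lemma3p2 (R : realType) (Phi : R[i] -> R[i]) (beta : R) :
  holomorphic_on right_half_plane Phi ->
  (* (a) *)
  (forall a b : R, 0 < a -> a < b ->
     ((fun y : R => expR (- pi * `|y|) *
        Rintegral (@lebesgue_measure R) `[a, b]
          (fun x : R => cabs (Phi (mkC x y) / mkC x y))) @ +oo --> (0 : R)) /\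
     ((fun y : R => expR (- pi * `|y|) *
        Rintegral (@lebesgue_measure R) `[a, b]
          (fun x : R => cabs (Phi (mkC x y) / mkC x y))) @ -oo --> (0 : R))) ->
  (* (b) *)
  (forall eta : R, 0 < eta -> exists M : R, forall x : R, eta <= x ->
     ((\int[@lebesgue_measure R]_(y in [set: R])
        ((cabs (Phi (mkC x y) / mkC x y) * expR (- pi * `|y|))%R)%:E) <= M%:E)%E) ->
  (* (c) *)
  ((fun x : R => (\int[@lebesgue_measure R]_(y in [set: R])
        ((cabs (Phi (mkC x y) / mkC x y) * expR (- pi * `|y|))%R)%:E)%E) @ +oo
     --> (0 : \bar R)%E) ->
  0 < beta ->
  (forall k : int, beta - 2^-1 != k%:~R) ->
  forall z : R[i], `|cRe z| != beta ->
    cabs (Iint beta Phi z) <=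
      Bconst beta Phi * `|(cos (pi * beta))^-1|
      * (1 + cabs z / `| `|cRe z| - beta |) * expR (pi * `|cIm z|).
Proof.
move=> hol _ hb _ b0 hbeta z hz.
set d := `| `|cRe z| - beta |.
have d0 : 0 < d by rewrite normr_gt0 subr_eq0.
set c0 := `|cos (pi * beta)|.
have c00 : 0 < c0 by rewrite normr_gt0 cos_pibeta_neq0.
set E := expR (pi * `|cIm z|).
set h := fun v => cabs (Phi (mkC beta v) / mkC beta v) * expR (- pi * `|v|).
set g := fun v => let w := mkC beta v in
     (ccos (piC R * z) / ccos (piC R * w)) * (2 * w / (z ^+ 2 - w ^+ 2)) * Phi w * 'i.
set K := 4 * E / c0 * (1 + cabs z / d).
have cPhi : @ccont R (fun v => Phi (mkC beta v)) by apply: ccont_Phi.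

have hw0 : forall v, 0 < cabs (mkC beta v).
  move=> v; apply: (lt_le_trans _ (cRe_le _ _)); by rewrite /cRe /= gtr0_norm.
have nz : forall a : R[i], 0 < cabs a -> a != 0.
  by move=> a; apply: contraTneq => ->; rewrite /cabs /cRe /cIm /= expr0n /= addr0 sqrtr0 ltxx.
have cosw : forall v, c0 * expR (pi * `|v|) / 2 <= cabs (ccos (piC R * mkC beta v)).
  move=> v; apply: le_trans (ccos_ge _ _).
  have -> : cRe (piC R * mkC beta v) = pi * beta by rewrite cReM /cRe /cIm /= mul0r subr0.
  have -> : cIm (piC R * mkC beta v) = pi * v by rewrite cImM /cRe /cIm /= mul0r addr0.
  rewrite -mulrA ler_pM2l //.
  by apply: le_trans (coshR_ge _ _); rewrite normrM gtr0_norm ?pi_gt0.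
have ccw : forall v, ccos (piC R * mkC beta v) != 0.
  move=> v; apply: nz; apply: lt_le_trans (cosw v).
  by rewrite divr_gt0 // mulr_gt0 // expR_gt0.
have dm : forall v, d <= cabs (mkC beta v - z).
  move=> v; apply: le_trans (cRe_le _ _).
  rewrite cReD cReN /cRe /= distrC.
  by apply: le_trans (ler_dist_dist _ _); rewrite (gtr0_norm b0).
have dp : forall v, d <= cabs (mkC beta v + z).
  move=> v; apply: le_trans (cRe_le _ _).
  rewrite cReD /cRe /= addrC -[X in `|_ + X|]opprK.
  by apply: le_trans (ler_dist_dist _ _); rewrite normrN (gtr0_norm b0).
have zw0 : forall v, z ^+ 2 - (mkC beta v) ^+ 2 != 0.
  move=> v; apply: nz.
  have -> : z ^+ 2 - mkC beta v ^+ 2 = - ((mkC beta v - z) * (mkC beta v + z)) by ring.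
  rewrite cabsN cabsM; apply: mulr_gt0; apply: lt_le_trans d0 _; [exact: dm|exact: dp].
have cabs2 : cabs (2 : R[i]) = 2.
  rewrite cabsMn; congr (_ *+ 2).
  by rewrite /cabs /cRe /cIm /= expr0n /= addr0 expr1n sqrtr1.
have cabsi : cabs ('i : R[i]) = 1.
  by rewrite /cabs /cRe /cIm /= expr0n /= add0r expr1n sqrtr1.
have cabs_pos : forall a : R[i], a != 0 -> 0 < cabs a.
  move=> a; rewrite lt_def cabs_ge0 andbT; apply: contra => /eqP H.
  by apply/eqP; apply: Normc.eq0_normc; rewrite -cabsE.
have hpt : forall v, cabs (g v) <= K * h v.
  move=> v; rewrite /g /h /=.
  set w := mkC beta v.
  rewrite !cabsM !cabsV cabs2 cabsi mulNr expRN.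
  apply: real_bound.
  - exact: cabs_ge0.
  - apply: le_trans (ccos_le _ _) _.
    have -> : cIm (piC R * z) = pi * cIm z by rewrite cImM /cRe /cIm /= mul0r addr0.
    by rewrite /E normrM gtr0_norm ?pi_gt0.
  - exact: c00.
  - exact: expR_gt0.
  - exact: cosw.
  - exact: hw0.
  - exact: (cabs_pos _ (zw0 v)).
  - exact: (@frac_bound R z w d d0 (dm v) (dp v)).
  - exact: cabs_ge0.
  - by rewrite divr_ge0 // ?cabs_ge0 // ltW.
have cw : @ccont R (fun v => mkC beta v).
  by move=> x; split; [exact: cvg_cst | exact: cvg_id].
have cwi : @ccont R (fun v => (mkC beta v)^-1).
  apply: ccont_inv => // v; exact: (cabs_pos _ _) || (apply: nz; exact: hw0).
have cg : @ccont R g.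
  rewrite /g /=.
  apply: ccont_mul; last exact: ccont_cst.
  apply: ccont_mul => //.
  apply: ccont_mul.
    apply: ccont_mul; first exact: ccont_cst.
    apply: ccont_inv => //.
    apply: ccont_ccos; apply: ccont_mul => //; exact: ccont_cst.
  apply: ccont_mul.
    by apply: ccont_mul => //; exact: ccont_cst.
  apply: ccont_inv => //.
  apply: ccont_add; first exact: ccont_cst.
  apply: ccont_opp; rewrite /GRing.exp /=; exact: ccont_mul.
have ch : continuous h.
  move=> v; rewrite /h.
  apply: (continuousM (s := fun v => cabs (Phi (mkC beta v) / mkC beta v)) (t := fun v => expR (- pi * `|v|))).
    by apply: ccont_cabs; apply: ccont_mul.
  apply: (continuous_comp (f := fun v => - pi * `|v|)); last exact: continuous_expR.
  apply: (continuousM (s := fun _ => - pi) (t := fun v => `|v|)); first exact: cvg_cst.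
  exact: norm_continuous.
have mh : measurable_fun setT h by exact: continuous_measurable_fun.
have h0 : forall v, 0 <= h v.
  by move=> v; rewrite /h mulr_ge0 ?cabs_ge0 // ltW // expR_gt0.
have hfin : (\int[@lebesgue_measure R]_(v in setT) (h v)%:E < +oo)%E.
  have [M HM] := hb beta b0.
  exact: le_lt_trans (HM beta (lexx _)) (ltry M).
have Hk := key g K (fun x => (cg x).1) (fun x => (cg x).2) mh hfin h0 hpt.
rewrite /Iint cabsM cabsV !cabsM cabs2 cabsi.
have -> : cabs (piC R) = pi.
  by rewrite /cabs /cRe /cIm /piC /= expr0n /= addr0 sqrtr_sqr gtr0_norm ?pi_gt0.
change (cintegral _) with (cintegral g).
have pi0 : 0 < pi :> R by exact: pi_gt0.
apply: le_trans (ler_wpM2l _ Hk) _.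
  by rewrite invr_ge0 mulr_ge0 // mulr_ge0 // ltW.
rewrite /Bconst -/h normfV -/c0 /K /E.
rewrite le_eqVlt; apply/orP; left; apply/eqP.
move: pi0; set p := pi; clearbody p => p0.
by field; rewrite !gt_eqF.
Qed.
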